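(* Let $n\ge 2$ and let $(u,v)$ be an MAB pair of binary words with $|u|=|v|=n$. Put $i=\mathrm{lsb}(u,v)$ and $j=\mathrm{lsb}(v,u)$. Then $i+j\le n$ if and only if there exist words $\alpha,\beta,\beta',\alpha'\in\Sigma^+$ and $x,x'\in\Sigma^*$ such that $u=\alpha x\beta$, $v=\beta' x'\alpha'$, $\beta\sim_{\mathrm{abl}}\beta'$, $\alpha\sim_{\mathrm{abl}}\alpha'$, $|\alpha|=j$, $|\beta|=i$, and both $(\beta,\beta')$ and $(\alpha,\alpha')$ are MAU pairs.
   Context: Let $\Sigma=\{a,b\}$. For a word $w$ and a letter $c$, $|w|_c$ denotes the number of occurrences of $c$ in $w$. Two words $x,y$ are abelian equivalent, written $x\sim_{\mathrm{abl}}y$, if $|x|_c=|y|_c$ for all $c\in\Sigma$. For words $u,v$: a pair $(x,y)$ is an internal abelian-border of $(u,v)$ if $x$ is a nonempty proper suffix of $u$, $y$ is a proper prefix of $v$, and $x\sim_{\mathrm{abl}}y$; it is an external abelian-border of $(u,v)$ if $x$ is a nonempty proper prefix of $u$, $y$ is a proper suffix of $v$, and $x\sim_{\mathrm{abl}}y$. The pair $(u,v)$ is mutually abelian-bordered (MAB) if it has both an internal and an external abelian-border, and mutually abelian-unbordered (MAU) if it has neither. If $(u,v)$ has an internal abelian-border, $\mathrm{sb}(u,v)$ denotes its internal abelian-border $(x,y)$ of minimal length and $\mathrm{lsb}(u,v)=|x|$ is that minimal length. *)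

(* Defs.v *)
From HB Require Import structures.
From mathcomp Require Import all_boot.
Set Implicit Arguments. Unset Strict Implicit. Unset Printing Implicit Defensive.

Inductive letter := La | Lb.
Definition letter_eqb (x y : letter) : bool :=
  match x, y with La, La | Lb, Lb => true | _, _ => false end.
Lemma letter_eqP : Equality.axiom letter_eqb.
Proof. by case; case; constructor. Qed.
HB.instance Definition _ := hasDecEq.Build letter letter_eqP.

Definition word := seq letter.

Definition occ (w : word) (c : letter) : nat := count_mem c w.

Definition abl (x y : word) : Prop := forall c : letter, occ x c = occ y c.

Definition int_border (u v x y : word) : Prop :=
  [/\ 0 < size x, size x < size u, suffix x u,
      size y < size v & prefix y v] /\ abl x y.

Definition ext_border (u v x y : word) : Prop :=
  [/\ 0 < size x, size x < size u, prefix x u,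
      size y < size v & suffix y v] /\ abl x y.

Definition has_int_border (u v : word) : Prop := exists x y, int_border u v x y.
Definition has_ext_border (u v : word) : Prop := exists x y, ext_border u v x y.

Definition MAB (u v : word) : Prop := has_int_border u v /\ has_ext_border u v.
Definition MAU (u v : word) : Prop := ~ has_int_border u v /\ ~ has_ext_border u v.

Definition is_lsb (u v : word) (i : nat) : Prop :=
  (exists x y, int_border u v x y /\ size x = i) /\
  (forall x y, int_border u v x y -> i <= size x).

(* Main.v *)
Require Import Defs.
From mathcomp Require Import all_boot.
From mathcomp Require Import zify.
Set Implicit Arguments. Unset Strict Implicit.

Lemma abl_size x y : abl x y -> size x = size y.
Proof.
have E : forall w : word, size w = occ w La + occ w Lb.
  by elim=> [|[] w IH] //=; rewrite /occ /= in IH *; rewrite IH; lia.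
by move=> H; rewrite !E !H.
Qed.

Lemma abl_sym x y : abl x y -> abl y x.
Proof. by move=> H c; rewrite H. Qed.

Lemma abl_catr a b c d : abl (a ++ b) (c ++ d) -> abl a c -> abl b d.
Proof. move=> H1 H2 l; move: (H1 l) (H2 l); rewrite /occ !count_cat; lia. Qed.

Lemma abl_catl a b c d : abl (a ++ b) (c ++ d) -> abl b d -> abl a c.
Proof. move=> H1 H2 l; move: (H1 l) (H2 l); rewrite /occ !count_cat; lia. Qed.

Lemma abl_cross x z w y : abl (x ++ z) (w ++ y) -> abl x y -> abl z w.
Proof. move=> H1 H2 l; move: (H1 l) (H2 l); rewrite /occ !count_cat; lia. Qed.

Lemma mau_sym a a' : MAU a a' -> MAU a' a.
Proof.
case=> Hi He; split.
- move=> [x [y [[h0 h1 h2 h3 h4] hab]]]; apply: He; exists y, x.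
  have s := abl_size hab.
  split; last exact: abl_sym. split => //; lia.
- move=> [x [y [[h0 h1 h2 h3 h4] hab]]]; apply: Hi; exists y, x.
  have s := abl_size hab.
  split; last exact: abl_sym. split => //; lia.
Qed.

Lemma mau_beta u v b b' : int_border u v b b' ->
  (forall x y, int_border u v x y -> size b <= size x) -> MAU b b'.
Proof.
move=> [[hb0 hb1 hb2 hb3 hb4] hbab] Hmin.
have sbb := abl_size hbab.
split.
- move=> [x [y [[h0 h1 h2 h3 h4] hab]]].
  have s := abl_size hab.
  have : size b <= size x; last lia.
  apply: (Hmin x y); split => //; split => //; try lia.
  + exact: suffix_trans h2 hb2.
  + exact: prefix_trans h4 hb4.
- move=> [x [y [[h0 h1 h2 h3 h4] hab]]].
  have s := abl_size hab.
  case/prefixP: h2 => z Ez. case/suffixP: h4 => w Ew.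
  change word in z; change word in w.
  have hzw : abl z w by apply: (abl_cross (x:=x) (y:=y)); rewrite -?Ez -?Ew.
  have szw := abl_size hzw.
  have e1 : size b = size x + size z by rewrite Ez size_cat.
  have e2 : size b' = size w + size y by rewrite Ew size_cat.
  have : size b <= size z; last lia.
  apply: (Hmin z w); split => //; split => //; try lia.
  + have hz : suffix z b by rewrite Ez suffix_suffix.
    exact: suffix_trans hz hb2.
  + have hw : prefix w b' by rewrite Ew prefix_prefix.
    exact: prefix_trans hw hb4.
Qed.
Lemma split3 (s : word) a b : a <= b ->
  s = take a s ++ drop a (take b s) ++ drop b s.
Proof.
move=> hab; rewrite catA -(take_takel _ hab) cat_take_drop cat_take_drop //.
Qed.

Theorem mainTheorem1 (n : nat) (u v : word) (i j : nat) :
  2 <= n -> size u = n -> size v = n -> MAB u v ->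
  is_lsb u v i -> is_lsb v u j ->
  (i + j <= n <->
   exists (alpha beta beta' alpha' x x' : word),
     [/\ 0 < size alpha, 0 < size beta, 0 < size beta' & 0 < size alpha'] /\
     [/\ u = alpha ++ x ++ beta, v = beta' ++ x' ++ alpha',
         abl beta beta' & abl alpha alpha'] /\
     [/\ size alpha = j, size beta = i, MAU beta beta' & MAU alpha alpha']).
Proof.
move=> Hn Hu Hv _ [[xb [yb [Hb Hbs]]] Hbmin] [[xa [ya [Ha Has]]] Hamin].
have Hb' := Hb; have Ha' := Ha.
case: Hb => [[hb0 hb1 hb2 hb3 hb4] hbab].
case: Ha => [[ha0 ha1 ha2 ha3 ha4] haab].
have sb := abl_size hbab; have sa := abl_size haab.
split.
- move=> Hij.
  exists ya, xb, yb, xa, (drop j (take (n - i) u)), (drop i (take (n - j) v)).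
  have Eya : take j u = ya by rewrite -Has sa; apply/eqP; rewrite -prefixE.
  have Eyb : take i v = yb by rewrite -Hbs sb; apply/eqP; rewrite -prefixE.
  have Exb : drop (n - i) u = xb by rewrite -Hbs -Hu; apply/eqP; rewrite -suffixE.
  have Exa : drop (n - j) v = xa by rewrite -Has -Hv; apply/eqP; rewrite -suffixE.
  split; first by split; lia.
  split; first split => //.
  + by rewrite -Eya -Exb -split3 //; lia.
  + by rewrite -Eyb -Exa -split3 //; lia.
  split => //; first by lia.
  + apply: mau_beta Hb' _ => x y H; rewrite Hbs; exact: Hbmin H.
  + apply: mau_sym; apply: mau_beta Ha' _ => x y H; rewrite Has; exact: Hamin H.
- case=> alpha [beta [beta' [alpha' [x [x' [_ [[Eu _ _ _] [sa' sb' _ _]]]]]]]].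
  have := congr1 size Eu; rewrite !size_cat; lia.
Qed.
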